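(* For each integer $l\ge0$, define $$R_l(z)=2i\,p_l(z)p_l(-z)+p_l'(z)p_l(-z)+p_l'(-z)p_l(z)+2i\,z^{2l}.$$ Then $R_l(z)=0$ identically, and consequently $$G_l(z)-G_l(-z)=-2i\,z^{2l+1}\,\frac{1}{p_l(z)\,p_l(-z)}.$$
   Context: $p_l(z)=\sum_{n=0}^l\frac{i^{-n-1}}{2^{l-n}}\frac{(2l-n)!}{(l-n)!\,n!}z^n$, so that the outgoing spherical Hankel function is $h_l^{(1)}(z)=z^{-l-1}p_l(z)e^{iz}$; $p_l'$ is the derivative of $p_l$. $G_l(z)=z\,\partial h_l^{(1)}(z)/h_l^{(1)}(z)$. *)

(* Defs.v *)
From Stdlib Require Import Reals Factorial.
From Coquelicot Require Import Coquelicot.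
Open Scope C_scope.

Definition pcoef (l n : nat) : C :=
  Cinv (Cpow Ci (n + 1)) *
  RtoC (INR (Factorial.fact (2 * l - n)) /
        (2 ^ (l - n) * INR (Factorial.fact (l - n)) * INR (Factorial.fact n)))%R.

Definition p (l : nat) (z : C) : C :=
  sum_n (fun n => pcoef l n * Cpow z n) l.

Definition dp (l : nat) (z : C) : C :=
  sum_n (fun n => RtoC (INR n) * pcoef l n * Cpow z (n - 1)) l.

Definition Cexp (w : C) : C :=
  RtoC (exp (Re w)) * (RtoC (cos (Im w)) + Ci * RtoC (sin (Im w))).

Definition h1 (l : nat) (z : C) : C :=
  p l z * Cexp (Ci * z) / Cpow z (l + 1).

Definition Rl (l : nat) (z : C) : C :=
  2 * Ci * p l z * p l (- z) + dp l z * p l (- z) + dp l (- z) * p l z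
  + 2 * Ci * Cpow z (2 * l).

(* Main.v *)
Require Import Defs.
From Stdlib Require Import Reals Lra Lia.
From Coquelicot Require Import Coquelicot.
Open Scope C_scope.

Open Scope R_scope.
Open Scope R_scope.
Lemma exp_le1 t : t <= 1 -> exp t <= exp 1.
Proof. intros H. destruct (Rle_lt_or_eq_dec _ _ H). apply Rlt_le, exp_increasing; auto. subst; lra. Qed.

Lemma abs_seg (t a : R) : Rabs (t - 0) <= Rabs (a - 0) -> Rabs t <= Rabs a.
Proof. rewrite !Rminus_0_r; auto. Qed.

Lemma exp_lin (a : R) : Rabs a <= 1 -> Rabs (exp a - 1) <= exp 1 * Rabs a.
Proof.
  intros Ha.
  replace (exp a - 1) with (exp a - exp 0) by (rewrite exp_0; ring).
  replace (Rabs a) with (Rabs (a - 0)) by (f_equal; ring).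
  apply (bounded_variation exp exp). intros t Ht. apply abs_seg in Ht. split.
  - apply is_derive_exp.
  - rewrite Rabs_pos_eq by (apply Rlt_le, exp_pos).
    apply exp_le1. pose proof (Rle_abs t). lra.
Qed.

Lemma exp_quad (a : R) : Rabs a <= 1 -> Rabs (exp a - 1 - a) <= exp 1 * (Rabs a * Rabs a).
Proof.
  intros Ha.
  replace (exp a - 1 - a) with ((exp a - a) - (exp 0 - 0)) by (rewrite exp_0; ring).
  replace (Rabs a * Rabs a) with (Rabs a * Rabs (a - 0)) by (f_equal; f_equal; ring).
  rewrite <- Rmult_assoc.
  apply (bounded_variation (fun t => exp t - t) (fun t => exp t - 1)). intros t Ht. apply abs_seg in Ht. split.
  - auto_derive; auto; ring.
  - eapply Rle_trans. apply exp_lin; lra.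
    apply Rmult_le_compat_l; [|lra]. apply Rlt_le, exp_pos.
Qed.

Lemma sin_lin (b : R) : Rabs (sin b) <= Rabs b.
Proof.
  replace (sin b) with (sin b - sin 0) by (rewrite sin_0; ring).
  replace (Rabs b) with (1 * Rabs (b - 0)) by (rewrite Rminus_0_r; ring).
  apply (bounded_variation sin cos). intros t Ht. split.
  - apply is_derive_cos || apply is_derive_sin.
  - apply Rabs_le. apply COS_bound.
Qed.

Lemma cos_lin (b : R) : Rabs (cos b - 1) <= Rabs b.
Proof.
  replace (cos b - 1) with (cos b - cos 0) by (rewrite cos_0; ring).
  replace (Rabs b) with (1 * Rabs (b - 0)) by (rewrite Rminus_0_r; ring).
  apply (bounded_variation cos (fun t => - sin t)). intros t Ht. split.
  - apply is_derive_cos.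
  - rewrite Rabs_Ropp. apply Rabs_le. apply SIN_bound.
Qed.

Lemma cos_quad (b : R) : Rabs (cos b - 1) <= Rabs b * Rabs b.
Proof.
  replace (cos b - 1) with (cos b - cos 0) by (rewrite cos_0; ring).
  replace (Rabs b * Rabs b) with (Rabs b * Rabs (b - 0)) by (rewrite Rminus_0_r; ring).
  apply (bounded_variation cos (fun t => - sin t)). intros t Ht. apply abs_seg in Ht. split.
  - apply is_derive_cos.
  - rewrite Rabs_Ropp. eapply Rle_trans. apply sin_lin. auto.
Qed.

Lemma sin_quad (b : R) : Rabs (sin b - b) <= Rabs b * Rabs b.
Proof.
  replace (sin b - b) with ((sin b - b) - (sin 0 - 0)) by (rewrite sin_0; ring).
  replace (Rabs b * Rabs b) with (Rabs b * Rabs (b - 0)) by (rewrite Rminus_0_r; ring).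
  apply (bounded_variation (fun t => sin t - t) (fun t => cos t - 1)). intros t Ht. apply abs_seg in Ht. split.
  - auto_derive; auto; ring.
  - eapply Rle_trans. apply cos_lin. auto.
Qed.
Open Scope C_scope.

Lemma im_le_Cmod (c : C) : Rle (Rabs (Im c)) (Cmod c).
Proof.
  pose proof (Cmod2_alt c). pose proof (Cmod_ge_0 c).
  rewrite <- (Rabs_pos_eq (Cmod c)) by lra.
  apply Rsqr_le_abs_0. unfold Rsqr. simpl in H. nra.
Qed.

Lemma re_le_Cmod' (c : C) : Rle (Rabs (Re c)) (Cmod c).
Proof. apply re_le_Cmod. Qed.

Lemma Cmod_pair (x y : R) : Rle (Cmod (x, y)) (Rabs x + Rabs y).
Proof.
  replace (x, y) with (RtoC x + Ci * RtoC y).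
  - eapply Rle_trans. apply Cmod_triangle. rewrite Cmod_mult, !Cmod_R.
    replace (Cmod Ci) with 1%R. lra.
    unfold Cmod, Ci; simpl. rewrite <- sqrt_1 at 1. f_equal. ring.
  - unfold RtoC, Ci, Cplus, Cmult; simpl. f_equal; ring.
Qed.

Lemma Cexp_pair (w : C) : Cexp w = (exp (Re w) * cos (Im w), exp (Re w) * sin (Im w))%R.
Proof. unfold Cexp, RtoC, Ci, Cplus, Cmult; simpl. f_equal; ring. Qed.

Lemma Cexp_add (a b : C) : Cexp (a + b) = Cexp a * Cexp b.
Proof.
  rewrite !Cexp_pair. destruct a as [a1 a2], b as [b1 b2]. simpl.
  rewrite exp_plus, cos_plus, sin_plus. unfold Cmult; simpl. f_equal; ring.
Qed.

Lemma Cexp_0 : Cexp 0 = 1.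
Proof. rewrite Cexp_pair. simpl. rewrite exp_0, cos_0, sin_0. apply injective_projections; simpl; ring. Qed.

Lemma Cexp_nz (w : C) : Cexp w <> 0.
Proof.
  intros H. assert (Cexp (w + - w) = 0) by (rewrite Cexp_add, H; ring).
  replace (w + - w) with (RtoC 0) in H0 by ring. rewrite Cexp_0 in H0.
  injection H0. lra.
Qed.

Lemma Cexp_quad (h : C) : Rlt (Cmod h) 1 ->
  Rle (Cmod (Cexp h - 1 - h)) (4 * exp 1 * Cmod h ^ 2).
Proof.
  intros Hh. pose proof (re_le_Cmod h) as Ha. pose proof (im_le_Cmod h) as Hb.
  rewrite Cexp_pair. destruct h as [a b]. simpl in *.
  set (r := Cmod (a, b)) in *.
  replace ((exp a * cos b, exp a * sin b)%R - 1 - (a, b))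
    with (((exp a - 1 - a) + exp a * (cos b - 1))%R, (exp a * (sin b - b) + (exp a - 1) * b)%R)
    by (unfold Cminus, Cplus, Copp, RtoC; simpl; f_equal; ring).
  eapply Rle_trans. apply Cmod_pair.
  assert (He : 0 < exp a <= exp 1).
  { split. apply exp_pos. apply exp_le1. pose proof (Rle_abs a). lra. }
  assert (E1 := exp_quad a ltac:(lra)).
  assert (E2 := cos_quad b). assert (E3 := sin_quad b). assert (E4 := exp_lin a ltac:(lra)).
  pose proof (Rabs_pos a). pose proof (Rabs_pos b). pose proof (exp_pos 1).
  assert (X1 : Rabs ((exp a - 1 - a) + exp a * (cos b - 1)) <= 2 * exp 1 * r^2).
  { eapply Rle_trans. apply Rabs_triang. rewrite Rabs_mult, (Rabs_pos_eq (exp a)) by lra.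
    pose proof (Rabs_pos (cos b - 1)).
    assert (Rabs a * Rabs a <= r^2) by nra. assert (Rabs b * Rabs b <= r^2) by nra. nra. }
  assert (X2 : Rabs (exp a * (sin b - b) + (exp a - 1) * b) <= 2 * exp 1 * r^2).
  { eapply Rle_trans. apply Rabs_triang. rewrite !Rabs_mult, (Rabs_pos_eq (exp a)) by lra.
    pose proof (Rabs_pos (sin b - b)). pose proof (Rabs_pos (exp a - 1)).
    assert (Rabs a * Rabs b <= r^2) by nra. assert (Rabs b * Rabs b <= r^2) by nra. nra. }
  lra.
Qed.
Lemma quad_deriv (f : C -> C) (x d : C) (M δ : R) : (0 < δ)%R -> (0 <= M)%R ->
  (forall h, (Cmod h < δ)%R -> Rle (Cmod (f (x+h) - f x - h*d)) (M * Cmod h ^ 2)) ->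
  is_derive f x d.
Proof.
  intros Hδ HM H. split.
  - apply is_linear_scal_l.
  - intros x' Hx'. assert (E := @is_filter_lim_locally_unique C_AbsRing (AbsRing_NormedModule C_AbsRing) x x' Hx'). subst x'.
    intros eps. apply (@locally_norm_le_locally C_AbsRing (AbsRing_NormedModule C_AbsRing)).
    assert (He : (0 < Rmin δ (eps / (M+1)))%R).
    { apply Rmin_pos; auto. apply Rdiv_lt_0_compat. apply cond_pos. lra. }
    exists (mkposreal _ He). intros y Hy. unfold ball_norm in Hy. simpl in Hy.
    change (norm (minus y x)) with (Cmod (y - x)) in *.
    change (norm (minus (minus (f y) (f x)) (scal (minus y x) d))) with (Cmod (f y - f x - (y - x) * d)).
    change C in y. set (h := (y - x)%C) in *.
    assert (Hy' : (y:C) = (x + h)%C) by (unfold h; ring). rewrite Hy'.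
    assert (Hh1 : (Cmod h < δ)%R) by (eapply Rlt_le_trans; [exact Hy| apply Rmin_l]).
    assert (Hh2 : (Cmod h < eps / (M+1))%R) by (eapply Rlt_le_trans; [exact Hy| apply Rmin_r]).
    eapply Rle_trans. apply H. exact Hh1.
    pose proof (Cmod_ge_0 h).
    assert (M * Cmod h <= eps)%R.
    { apply Rle_trans with ((M+1) * Cmod h)%R. nra.
      replace (pos eps) with ((M+1) * (eps/(M+1)))%R by (field; lra). nra. }
    simpl. nra.
Qed.

Lemma is_derive_Cexp (w : C) : is_derive Cexp w (Cexp w).
Proof.
  apply (quad_deriv _ _ _ (Cmod (Cexp w) * (4 * exp 1)) 1).
  lra. pose proof (Cmod_ge_0 (Cexp w)). pose proof (exp_pos 1). nra.
  intros h Hh. replace (Cexp (w + h) - Cexp w - h * Cexp w) with (Cexp w * (Cexp h - 1 - h))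
    by (rewrite Cexp_add; ring).
  rewrite Cmod_mult, Rmult_assoc. apply Rmult_le_compat_l. apply Cmod_ge_0.
  apply Cexp_quad; auto.
Qed.

Lemma is_derive_Cinv (w : C) : w <> 0 -> is_derive Cinv w (- / (w * w)).
Proof.
  intros Hw. assert (Hm : Rlt 0 (Cmod w)) by (apply Cmod_gt_0; auto).
  apply (quad_deriv _ _ _ (2 / Cmod w ^ 3) (Cmod w / 2)).
  lra. apply Rlt_le, Rdiv_lt_0_compat; [lra| apply pow_lt; auto].
  intros h Hh.
  assert (Hwh : Rle (Cmod w / 2) (Cmod (w + h))).
  { pose proof (Cmod_triangle (w + h) (- h)). rewrite Cmod_opp in H.
    replace (w + h + - h) with w in H by ring. lra. }
  assert (Hnz : w + h <> 0).
  { intros E. rewrite E, Cmod_0 in Hwh. lra. }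
  replace (/ (w + h) - / w - h * - / (w * w)) with (h * h / (w * w * (w + h)))
    by (field; auto).
  rewrite Cmod_div by (repeat apply Cmult_neq_0; auto).
  rewrite !Cmod_mult.
  pose proof (Cmod_ge_0 h).
  apply Rle_trans with (Cmod h * Cmod h / (Cmod w * Cmod w * (Cmod w / 2)))%R.
  - apply Rmult_le_compat_l. nra.
    apply Rinv_le_contravar. assert (0 < Cmod w * Cmod w) by nra. nra.
    apply Rmult_le_compat_l; nra.
  - right. field. lra.
Qed.
Open Scope C_scope.
Open Scope C_scope.

Lemma sC_plus (f g : nat -> C) N : sum_n (fun k => f k + g k) N = sum_n f N + sum_n g N.
Proof. exact (sum_n_plus f g N). Qed.
Lemma sC_mult_l (c : C) (f : nat -> C) N : sum_n (fun k => c * f k) N = c * sum_n f N.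
Proof. exact (@sum_n_mult_l C_Ring c f N). Qed.
Lemma sC_ext (f g : nat -> C) N : (forall k, (k <= N)%nat -> f k = g k) -> sum_n f N = sum_n g N.
Proof. apply sum_n_ext_loc. Qed.
Lemma sC_mult_r (c : C) (f : nat -> C) N : (sum_n (fun k => f k * c) N : C) = sum_n f N * c.
Proof. rewrite (sC_ext _ (fun k => c * f k)) by (intros; ring). rewrite sC_mult_l. ring. Qed.
Lemma sC_Sn (f : nat -> C) N : sum_n f (S N) = sum_n f N + f (S N).
Proof. exact (sum_Sn f N). Qed.
Lemma sC_O (f : nat -> C) : sum_n f 0 = f O.
Proof. exact (sum_O f). Qed.


Lemma sC_zero (f : nat -> C) N : (forall k, (k <= N)%nat -> f k = 0) -> (sum_n f N : C) = 0.
Proof.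
  induction N; intros H. rewrite sC_O; apply H; lia.
  rewrite sC_Sn, IHN. rewrite H by lia. ring. intros; apply H; lia.
Qed.

Lemma sC_last (f : nat -> C) N : (forall k, (k < N)%nat -> f k = 0) -> (sum_n f N : C) = f N.
Proof.
  destruct N; intros H. apply sC_O.
  rewrite sC_Sn, sC_zero. ring. intros; apply H; lia.
Qed.

Lemma sC_single (f : nat -> C) N m : (m <= N)%nat ->
  (forall k, (k <= N)%nat -> k <> m -> f k = 0) -> (sum_n f N : C) = f m.
Proof.
  induction N; intros Hm H.
  - rewrite sC_O. assert (m = 0%nat) by lia. subst; auto.
  - rewrite sC_Sn. destruct (Nat.eq_dec m (S N)).
    + subst. rewrite sC_zero. ring. intros; apply H; lia.
    + rewrite IHN by (try lia; intros; apply H; lia). rewrite (H (S N)) by lia. ring.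
Qed.

Lemma sC_shift (f : nat -> C) N : (sum_n f (S N) : C) = f O + sum_n (fun k => f (S k)) N.
Proof.
  induction N. rewrite sC_Sn, !sC_O; auto.
  rewrite sC_Sn, IHN, sC_Sn. ring.
Qed.

Lemma sC_telescope (G : nat -> C) N : (sum_n (fun j => G (S j) - G j) N : C) = G (S N) - G O.
Proof.
  induction N. rewrite sC_O; auto. rewrite sC_Sn, IHN. ring.
Qed.

Definition cpoly (x : nat -> C) (N : nat) (z : C) : C := sum_n (fun k => x k * Cpow z k) N.
Definition conv (x y : nat -> C) (k : nat) : C := sum_n (fun j => x j * y (k - j)%nat) k.

Lemma poly_tail (x : nat -> C) l N z : (l <= N)%nat -> (forall k, (l < k)%nat -> x k = 0) ->
  cpoly x N z = cpoly x l z.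
Proof.
  intros H Hx. induction H. auto. unfold cpoly in *. rewrite sC_Sn, IHle, Hx by lia. ring.
Qed.

Lemma conv_triangle (x y : nat -> C) z M :
  (sum_n (fun k => conv x y k * Cpow z k) M : C) =
  sum_n (fun j => x j * Cpow z j * cpoly y (M - j) z) M.
Proof.
  induction M.
  - rewrite !sC_O. unfold conv, cpoly. simpl. rewrite !sC_O. simpl. ring.
  - rewrite sC_Sn, IHM, sC_Sn. rewrite Nat.sub_diag.
    replace (cpoly y 0 z) with (y O * Cpow z 0) by (unfold cpoly; rewrite sC_O; auto).
    rewrite (sC_ext (fun j => x j * Cpow z j * cpoly y (S M - j) z)
       (fun j => x j * Cpow z j * cpoly y (M - j) z + x j * y (S M - j)%nat * Cpow z (S M))).
    2:{ intros k Hk. replace (S M - k)%nat with (S (M - k)) by lia. unfold cpoly. rewrite sC_Sn.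
        replace (Cpow z (S M)) with (Cpow z k * Cpow z (S (M - k))).
        ring. rewrite <- Cpow_add_r. f_equal. lia. }
    rewrite sC_plus. unfold conv. rewrite sC_Sn. rewrite Nat.sub_diag.
    rewrite sC_mult_r. simpl. ring.
Qed.

Lemma cauchy_prod (x y : nat -> C) l z :
  (forall k, (l < k)%nat -> x k = 0) -> (forall k, (l < k)%nat -> y k = 0) ->
  cpoly x l z * cpoly y l z = sum_n (fun k => conv x y k * Cpow z k) (2 * l).
Proof.
  intros Hx Hy. rewrite conv_triangle.
  rewrite (sC_ext _ (fun j => cpoly y l z * (x j * Cpow z j))).
  - rewrite sC_mult_l. fold (cpoly x (2*l) z). rewrite (poly_tail x l (2*l)) by (auto; lia). ring.
  - intros k Hk. destruct (Compare_dec.le_lt_dec k l).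
    + rewrite (poly_tail y l) by (auto; lia). ring.
    + rewrite Hx by auto. ring.
Qed.

Definition Fr (l n : nat) : R :=
  (INR (Factorial.fact (2 * l - n)) /
        (2 ^ (l - n) * INR (Factorial.fact (l - n)) * INR (Factorial.fact n)))%R.

Lemma pcoef_Fr l n : pcoef l n = (/ Cpow Ci (n + 1) * RtoC (Fr l n))%C.
Proof. reflexivity. Qed.

Lemma Fr_rec k m : let l := (k + 1 + m)%nat in
  ((2 * INR l - INR k) * INR (S k) * Fr l (S k) = 2 * (INR l - INR k) * Fr l k)%R.
Proof.
  intros l. unfold Fr, l.
  replace (2 * (k + 1 + m) - S k)%nat with (k + 1 + 2 * m)%nat by lia.
  replace (2 * (k + 1 + m) - k)%nat with (S (k + 1 + 2 * m))%nat by lia.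
  replace (k + 1 + m - S k)%nat with m by lia.
  replace (k + 1 + m - k)%nat with (S m) by lia.
  change (Factorial.fact (S (k + 1 + 2 * m))) with (S (k + 1 + 2 * m) * Factorial.fact (k + 1 + 2 * m))%nat.
  change (Factorial.fact (S m)) with (S m * Factorial.fact m)%nat.
  change (Factorial.fact (S k)) with (S k * Factorial.fact k)%nat.
  rewrite !mult_INR. simpl pow.
  pose proof (INR_fact_neq_0 (k + 1 + 2 * m)). pose proof (INR_fact_neq_0 m).
  pose proof (INR_fact_neq_0 k). pose proof (pow_lt 2 m ltac:(lra)).
  pose proof (pos_INR k). pose proof (pos_INR m).
  rewrite !S_INR, !plus_INR, !mult_INR. simpl (INR 1). simpl (INR 2).
  field. repeat split; lra.
Qed.

Open Scope C_scope.

Lemma Ci_inv : / Ci = - Ci.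
Proof. unfold Cinv, Ci, Copp; simpl. apply injective_projections; simpl; field. Qed.
Lemma Ci_sq : Ci * Ci = -1.
Proof. unfold Ci, Cmult, Copp; simpl. apply injective_projections; simpl; ring. Qed.

Lemma lin_comb (x y u v w : C) : u = v -> x - y = w * (u - v) -> x = y.
Proof. intros H E. rewrite H in E. replace (v - v) with (RtoC 0) in E by ring.
  rewrite Cmult_0_r in E. apply Ceq_minus in E. auto. Qed.

Definition acoef (l k : nat) : C := if (k <=? l)%nat then pcoef l k else 0.
Definition bcoef (l k : nat) : C := Cpow (-1) k * acoef l k.
Definition Acoef (l k : nat) : C := RtoC (INR (S k)) * acoef l (S k).
Definition Bcoef (l k : nat) : C := RtoC (INR (S k)) * bcoef l (S k).

Lemma acoef_big l k : (l < k)%nat -> acoef l k = 0.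
Proof. intros H. unfold acoef. destruct (Nat.leb_spec k l); [lia|auto]. Qed.
Lemma acoef_small l k : (k <= l)%nat -> acoef l k = pcoef l k.
Proof. intros H. unfold acoef. destruct (Nat.leb_spec k l); [auto|lia]. Qed.

Lemma recA l k : RtoC (INR k - 2 * INR l) * Acoef l k = 2 * Ci * RtoC (INR l - INR k) * acoef l k.
Proof.
  unfold Acoef. destruct (Compare_dec.le_lt_dec (S k) l) as [H1|H1].
  - rewrite !acoef_small by lia. rewrite !pcoef_Fr.
      pose proof (Fr_rec k (l - k - 1)) as H. cbv beta zeta in H.
      replace (k + 1 + (l - k - 1))%nat with l in H by lia.
      apply (f_equal RtoC) in H. rewrite !RtoC_mult, !RtoC_minus, !RtoC_mult in H.
      replace (Cpow Ci (S k + 1)) with (Ci * Cpow Ci (k + 1)) by (rewrite <- Cpow_S; f_equal; lia).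
      assert (Hc : Cpow Ci (k + 1) <> 0) by (apply Cpow_nz, Ci_nz).
      replace (/ (Ci * Cpow Ci (k + 1))) with (- Ci * / Cpow Ci (k + 1))
        by (rewrite <- Ci_inv; field; split; [exact Hc| apply Ci_nz]).
      rewrite !RtoC_minus, !RtoC_mult.
      apply (lin_comb _ _ _ _ (Ci * / Cpow Ci (k + 1)) H). ring.
  - rewrite (acoef_big l (S k)) by lia. destruct (Nat.eq_dec k l).
    + subst. replace (INR l - INR l)%R with 0%R by ring. ring.
    + rewrite acoef_big by lia. ring.
Qed.

Lemma recB l k : RtoC (INR k - 2 * INR l) * Bcoef l k = - (2 * Ci * RtoC (INR l - INR k)) * bcoef l k.
Proof.
  unfold Bcoef, bcoef. pose proof (recA l k) as H. unfold Acoef in H.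
  rewrite Cpow_S.
  replace (RtoC (INR k - 2 * INR l) * (RtoC (INR (S k)) * (-1 * Cpow (-1) k * acoef l (S k))))
    with (- Cpow (-1) k * (RtoC (INR k - 2 * INR l) * (RtoC (INR (S k)) * acoef l (S k)))) by ring.
  rewrite H. ring.
Qed.

Lemma lin_comb2 (x y u1 v1 u2 v2 w1 w2 : C) : u1 = v1 -> u2 = v2 ->
  x - y = w1 * (u1 - v1) + w2 * (u2 - v2) -> x = y.
Proof. intros H1 H2 E. rewrite H1, H2 in E. apply Ceq_minus. rewrite E. ring. Qed.

Lemma term_id l j m :
  RtoC (INR (j + m) - 2 * INR l) * (Acoef l j * bcoef l m - acoef l j * Bcoef l m + 2 * Ci * acoef l j * bcoef l m)
  = RtoC (INR m) * Acoef l j * bcoef l m - RtoC (INR j) * acoef l j * Bcoef l m.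
Proof.
  pose proof (recA l j) as HA. pose proof (recB l m) as HB.
  rewrite plus_INR. rewrite !RtoC_minus, !RtoC_plus, !RtoC_mult in *.
  apply (lin_comb2 _ _ _ _ _ _ (bcoef l m) (- acoef l j) HA HB). ring.
Qed.

Definition scoef (l k : nat) : C :=
  conv (Acoef l) (bcoef l) k - conv (acoef l) (Bcoef l) k + 2 * Ci * conv (acoef l) (bcoef l) k.

Lemma sC_lin3 (al be ga : C) (X Y Z : nat -> C) N :
  (sum_n (fun j => al * X j + be * Y j + ga * Z j) N : C) = al * sum_n X N + be * sum_n Y N + ga * sum_n Z N.
Proof. rewrite !sC_plus, !sC_mult_l. auto. Qed.

Lemma s_mul l k : RtoC (INR k - 2 * INR l) * scoef l k = 0.
Proof.
  unfold scoef, conv.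
  transitivity (sum_n (fun j => RtoC (INR k - 2 * INR l) * (Acoef l j * bcoef l (k - j)%nat)
     + (- RtoC (INR k - 2 * INR l)) * (acoef l j * Bcoef l (k - j)%nat)
     + (RtoC (INR k - 2 * INR l) * (2 * Ci)) * (acoef l j * bcoef l (k - j)%nat)) k).
  { rewrite sC_lin3. ring. }
  set (G := fun j => RtoC (INR j) * acoef l j * RtoC (INR (S k - j)) * bcoef l (S k - j)%nat).
  transitivity (sum_n (fun j => G (S j) - G j) k).
  { apply sC_ext. intros j Hj.
    replace (INR k) with (INR (j + (k - j))) by (f_equal; lia).
    transitivity (RtoC (INR (j + (k - j)) - 2 * INR l) * (Acoef l j * bcoef l (k - j) - acoef l j * Bcoef l (k - j) + 2 * Ci * acoef l j * bcoef l (k - j))).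
    ring. rewrite term_id. unfold G, Acoef, Bcoef.
    replace (S k - S j)%nat with (k - j)%nat by lia.
    replace (S k - j)%nat with (S (k - j)) by lia. ring. }
  rewrite sC_telescope. unfold G. rewrite Nat.sub_diag. simpl INR. ring.
Qed.

Lemma s_zero l k : k <> (2 * l)%nat -> scoef l k = 0.
Proof.
  intros Hk. pose proof (s_mul l k) as H.
  assert (Hx : RtoC (INR k - 2 * INR l) <> 0).
  { intros E. apply RtoC_inj in E. apply Hk. apply INR_eq. rewrite mult_INR. simpl (INR 2). lra. }
  replace (scoef l k) with (/ RtoC (INR k - 2 * INR l) * (RtoC (INR k - 2 * INR l) * scoef l k)) by (field; auto).
  rewrite H. ring.
Qed.

Lemma Fr_ll l : Fr l l = 1%R.
Proof.
  unfold Fr. replace (2 * l - l)%nat with l by lia. rewrite Nat.sub_diag. simpl.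
  pose proof (INR_fact_neq_0 l). field. auto.
Qed.

Lemma s_top l : scoef l (2 * l) = - (2 * Ci).
Proof.
  unfold scoef, conv.
  rewrite (sC_zero (fun j => Acoef l j * bcoef l (2 * l - j))).
  2:{ intros j Hj. unfold Acoef, bcoef. destruct (Compare_dec.le_lt_dec l j).
      rewrite (acoef_big l (S j)) by lia. ring. rewrite (acoef_big l (2 * l - j)) by lia. ring. }
  rewrite (sC_zero (fun j => acoef l j * Bcoef l (2 * l - j))).
  2:{ intros j Hj. unfold Bcoef, bcoef. destruct (Compare_dec.le_lt_dec j l).
      rewrite (acoef_big l (S (2 * l - j))) by lia. ring. rewrite (acoef_big l j) by lia. ring. }
  rewrite (sC_single _ (2 * l) l).
  2: lia.
  2:{ intros j Hj Hne; unfold bcoef.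
     destruct (Compare_dec.le_lt_dec j l).
     rewrite (acoef_big l (2 * l - j)) by lia. ring. rewrite (acoef_big l j) by lia. ring. }
  unfold bcoef. replace (2 * l - l)%nat with l by lia.
  rewrite acoef_small by lia. rewrite pcoef_Fr, Fr_ll.
  assert (Hu : Cpow (-1) l * Cpow (-1) l = 1).
  { rewrite <- Cpow_mult_l. replace (-1 * -1) with (RtoC 1) by ring. apply Cpow_1_l. }
  assert (Hc : Cpow Ci (l + 1) * Cpow Ci (l + 1) = - Cpow (-1) l).
  { rewrite <- Cpow_mult_l, Ci_sq, Nat.add_1_r, Cpow_S. ring. }
  assert (Hu0 : Cpow (-1) l <> 0). { intros E. rewrite E in Hu. apply C1_nz. rewrite <- Hu. ring. }
  assert (Hc0 : Cpow Ci (l + 1) <> 0) by (apply Cpow_nz, Ci_nz).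
  replace (2 * Ci * (/ Cpow Ci (l + 1) * RtoC 1 * (Cpow (-1) l * (/ Cpow Ci (l + 1) * RtoC 1))))
    with (2 * Ci * Cpow (-1) l / (Cpow Ci (l + 1) * Cpow Ci (l + 1))) by (field; auto).
  rewrite Hc. field. auto.
Qed.

Lemma Cpow_opp (z : C) k : Cpow (- z) k = Cpow (-1) k * Cpow z k.
Proof. rewrite <- Cpow_mult_l. f_equal. ring. Qed.

Lemma p_poly l z : p l z = cpoly (acoef l) l z.
Proof. unfold p, cpoly. apply sC_ext. intros k Hk. rewrite acoef_small; auto. Qed.

Lemma pm_poly l z : p l (- z) = cpoly (bcoef l) l z.
Proof. unfold p, cpoly, bcoef. apply sC_ext. intros k Hk. rewrite acoef_small, Cpow_opp by auto. ring. Qed.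

Lemma dp_gen l w : dp l w = sum_n (fun k => RtoC (INR (S k)) * acoef l (S k) * Cpow w k) l.
Proof.
  unfold dp.
  rewrite (sC_ext _ (fun n => RtoC (INR n) * acoef l n * Cpow w (n - 1))).
  2:{ intros k Hk. rewrite acoef_small; auto. }
  transitivity (sum_n (fun n => RtoC (INR n) * acoef l n * Cpow w (n - 1)) (S l)).
  { rewrite sC_Sn, (acoef_big l (S l)) by lia. rewrite Cmult_0_r, Cmult_0_l, Cplus_0_r. reflexivity. }
  rewrite sC_shift. simpl (INR 0). rewrite Cmult_0_l, Cmult_0_l, Cplus_0_l.
  apply sC_ext. intros k Hk. simpl (S k - 1)%nat. rewrite Nat.sub_0_r. auto.
Qed.

Lemma dp_poly l z : dp l z = cpoly (Acoef l) l z.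
Proof. rewrite dp_gen. unfold cpoly, Acoef. auto. Qed.

Lemma dpm_poly l z : dp l (- z) = - cpoly (Bcoef l) l z.
Proof.
  rewrite dp_gen. unfold cpoly, Bcoef, bcoef.
  assert (E : forall S : C, - S = - (1) * S) by (intros; ring). rewrite (E (sum_n _ l)).
  rewrite <- sC_mult_l. apply sC_ext. intros k Hk. rewrite Cpow_opp, Cpow_S. ring.
Qed.

Lemma Rl_zero l z : Rl l z = 0.
Proof.
  unfold Rl. rewrite p_poly, pm_poly, dp_poly, dpm_poly.
  assert (Ha : forall k, (l < k)%nat -> acoef l k = 0) by (intros; apply acoef_big; auto).
  assert (Hb : forall k, (l < k)%nat -> bcoef l k = 0) by (intros; unfold bcoef; rewrite Ha; auto; ring).
  assert (HA : forall k, (l < k)%nat -> Acoef l k = 0) by (intros; unfold Acoef; rewrite Ha; auto; ring).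
  assert (HB : forall k, (l < k)%nat -> Bcoef l k = 0) by (intros; unfold Bcoef; rewrite Hb; auto; ring).
  replace (2 * Ci * cpoly (acoef l) l z * cpoly (bcoef l) l z + cpoly (Acoef l) l z * cpoly (bcoef l) l z +
    - cpoly (Bcoef l) l z * cpoly (acoef l) l z)
    with (cpoly (Acoef l) l z * cpoly (bcoef l) l z - cpoly (acoef l) l z * cpoly (Bcoef l) l z
          + 2 * Ci * (cpoly (acoef l) l z * cpoly (bcoef l) l z)) by ring.
  rewrite !cauchy_prod by auto.
  rewrite <- (Cmult_1_l (sum_n (fun k => conv (acoef l) (Bcoef l) k * Cpow z k) (2 * l))).
  replace (sum_n (fun k => conv (Acoef l) (bcoef l) k * Cpow z k) (2 * l) -
     RtoC 1 * sum_n (fun k => conv (acoef l) (Bcoef l) k * Cpow z k) (2 * l) +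
     2 * Ci * sum_n (fun k => conv (acoef l) (bcoef l) k * Cpow z k) (2 * l))
   with (1 * sum_n (fun k => conv (Acoef l) (bcoef l) k * Cpow z k) (2 * l) +
     (- (1)) * sum_n (fun k => conv (acoef l) (Bcoef l) k * Cpow z k) (2 * l) +
     2 * Ci * sum_n (fun k => conv (acoef l) (bcoef l) k * Cpow z k) (2 * l)) by ring.
  rewrite <- sC_lin3.
  rewrite (sC_ext _ (fun k => scoef l k * Cpow z k)) by (intros; unfold scoef; ring).
  rewrite sC_last.
  - rewrite s_top. ring.
  - intros k Hk. rewrite s_zero by lia. ring.
Qed.
Open Scope C_scope.
Open Scope C_scope.

Lemma is_derive_eq (f : C -> C) (x d d' : C) : is_derive f x d -> d = d' -> is_derive f x d'.
Proof. intros H E. subst. auto. Qed.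

Lemma tr1 (f : C -> C) x d : @is_derive C_AbsRing C_NormedModule f x d -> @is_derive C_AbsRing (AbsRing_NormedModule C_AbsRing) f x d.
Proof. intros H. destruct H as [H1 H2]. split. apply is_linear_scal_l. intros y Hy. specialize (H2 y Hy).
  intros eps. specialize (H2 eps). exact H2. Qed.
Lemma tr2 (f : C -> C) x d : @is_derive C_AbsRing (AbsRing_NormedModule C_AbsRing) f x d -> @is_derive C_AbsRing C_NormedModule f x d.
Proof. intros H. destruct H as [H1 H2]. split. apply is_linear_scal_l. intros y Hy. specialize (H2 y Hy).
  intros eps. specialize (H2 eps). exact H2. Qed.

Lemma is_derive_Cmult (f g : C -> C) x df dg : is_derive f x df -> is_derive g x dg ->
  is_derive (fun t => f t * g t) x (df * g x + f x * dg).
Proof. intros Hf Hg. apply tr2. exact (is_derive_mult f g x df dg (tr1 _ _ _ Hf) (tr1 _ _ _ Hg) Cmult_comm). Qed.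

Lemma is_derive_Cconst (c x : C) : is_derive (fun _ : C => c) x (RtoC 0).
Proof. exact (@is_derive_const C_AbsRing C_NormedModule c x). Qed.

Lemma is_derive_Cid (x : C) : is_derive (fun t : C => t) x (RtoC 1).
Proof. apply tr2. exact (@is_derive_id C_AbsRing x). Qed.

Lemma is_derive_Cpow (n : nat) (z : C) : is_derive (fun w => Cpow w n) z (RtoC (INR n) * Cpow z (n - 1)).
Proof.
  induction n.
  - apply (is_derive_ext (fun _ : C => RtoC 1)). intros; reflexivity.
    eapply is_derive_eq. apply is_derive_Cconst. simpl. ring.
  - eapply is_derive_eq. apply (is_derive_Cmult (fun t => t) (fun w => Cpow w n)).
    apply is_derive_Cid. apply IHn.
    destruct n. simpl. ring.
    rewrite !S_INR, RtoC_plus. simpl (S (S n) - 1)%nat. simpl (S n - 1)%nat. rewrite Nat.sub_0_r.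
    rewrite !RtoC_plus. simpl. ring.
Qed.

Lemma is_derive_p (l : nat) (z : C) : is_derive (p l) z (dp l z).
Proof.
  unfold p. eapply is_derive_eq.
  apply (is_derive_sum_n (fun k y => pcoef l k * Cpow y k) l z
           (fun k => pcoef l k * (RtoC (INR k) * Cpow z (k - 1)))).
  - intros k Hk. eapply is_derive_eq.
    apply (is_derive_Cmult (fun _ => pcoef l k) (fun y => Cpow y k)).
    apply is_derive_Cconst. apply is_derive_Cpow. ring.
  - unfold dp. apply sC_ext. intros; ring.
Qed.

Definition Dh (l : nat) (z : C) : C :=
  (dp l z * Cexp (Ci * z) + p l z * (Ci * Cexp (Ci * z))) * / Cpow z (l + 1)
  + p l z * Cexp (Ci * z) * (RtoC (INR (l + 1)) * Cpow z l * - / (Cpow z (l + 1) * Cpow z (l + 1))).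

Lemma is_derive_h1 (l : nat) (z : C) : z <> 0 -> is_derive (h1 l) z (Dh l z).
Proof.
  intros Hz.
  assert (HP : Cpow z (l + 1) <> 0) by (apply Cpow_nz; auto).
  assert (HE : is_derive (fun w => Cexp (Ci * w)) z (Ci * Cexp (Ci * z))).
  { eapply is_derive_eq. apply (is_derive_comp Cexp (fun w => Ci * w)).
    apply is_derive_Cexp.
    apply tr1. eapply is_derive_eq. apply (is_derive_Cmult (fun _ => Ci) (fun w => w)).
    apply is_derive_Cconst. apply is_derive_Cid. reflexivity.
    simpl. change (scal (0 * z + Ci * 1) (Cexp (Ci * z))) with ((0 * z + Ci * 1) * Cexp (Ci * z)). ring. }
  assert (HI : is_derive (fun w => / Cpow w (l + 1)) z
                 (RtoC (INR (l + 1)) * Cpow z l * - / (Cpow z (l + 1) * Cpow z (l + 1)))).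
  { eapply is_derive_eq. apply (is_derive_comp Cinv (fun w => Cpow w (l + 1))).
    apply is_derive_Cinv; auto. apply tr1. apply is_derive_Cpow.
    change (scal (RtoC (INR (l + 1)) * Cpow z (l + 1 - 1)) (- / (Cpow z (l + 1) * Cpow z (l + 1))))
      with ((RtoC (INR (l + 1)) * Cpow z (l + 1 - 1)) * (- / (Cpow z (l + 1) * Cpow z (l + 1)))).
    replace (l + 1 - 1)%nat with l by lia. reflexivity. }
  unfold h1.
  apply (is_derive_ext (fun w => (p l w * Cexp (Ci * w)) * / Cpow w (l + 1))). intros; reflexivity.
  eapply is_derive_eq. apply is_derive_Cmult. apply is_derive_Cmult. apply is_derive_p. exact HE. exact HI.
  unfold Dh. reflexivity.
Qed.

Lemma G_form (l : nat) (w : C) : w <> 0 -> p l w <> 0 ->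
  w * Dh l w / h1 l w = w * dp l w / p l w + Ci * w - RtoC (INR (l + 1)).
Proof.
  intros Hw Hp. unfold Dh, h1.
  assert (HE := Cexp_nz (Ci * w)).
  assert (Hl : Cpow w l <> 0) by (apply Cpow_nz; auto).
  replace (Cpow w (l + 1)) with (w * Cpow w l) by (rewrite Nat.add_1_r; reflexivity).
  field. repeat split; auto.
Qed.

Theorem lemma8p4 (l : nat) :
  (forall z : C, Rl l z = 0) /\
  (forall z : C, z <> 0 -> p l z <> 0 -> p l (- z) <> 0 ->
     exists d1 d2 : C,
       is_derive (h1 l) z d1 /\ is_derive (h1 l) (- z) d2 /\
       z * d1 / h1 l z - (- z) * d2 / h1 l (- z)
       = - (2 * Ci) * Cpow z (2 * l + 1) / (p l z * p l (- z))).
Proof.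
  split. apply Rl_zero.
  intros z Hz Hp Hm.
  assert (Hz' : - z <> 0). { intros E. apply Hz. replace z with (- - z) by ring. rewrite E. ring. }
  exists (Dh l z), (Dh l (- z)). split; [|split].
  - apply is_derive_h1; auto.
  - apply is_derive_h1; auto.
  - rewrite G_form, G_form by auto.
    pose proof (Rl_zero l z) as HR. unfold Rl in HR.
    replace (Cpow z (2 * l + 1)) with (z * Cpow z (2 * l)) by (rewrite Nat.add_1_r; reflexivity).
    apply (lin_comb _ _ _ _ (z / (p l z * p l (- z))) HR).
    field. split; auto.
Qed.
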